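(* Let $n$ be a positive integer, let $f\in C[0,1]$ with $p=P_{\mathcal{P}_n}(f)$, and let $\mu\in C^*[0,1]$ satisfy $\langle\mu,f\rangle\neq 0$. Then: (i) for every $\gamma\in\mathcal{P}_n^\perp$, $\mu\notin\widehat{D}^*P_{\mathcal{P}_n}(f)(\gamma)$; (ii) if $\mu\in\mathcal{P}_n^\perp$, then $\mu$ is not a fixed point of $\widehat{D}^*P_{\mathcal{P}_n}(f)$, i.e. $\mu\notin\widehat{D}^*P_{\mathcal{P}_n}(f)(\mu)$.
   Context: $C[0,1]$ is the Banach space of continuous real-valued functions on $[0,1]$ with the maximum norm $\|f\|=\max_{0\le t\le 1}|f(t)|$. For a nonnegative integer $n$, $\mathcal{P}_n\subseteq C[0,1]$ denotes the closed subspace of real polynomials of degree at most $n$. The metric projection $P_{\mathcal{P}_n}:C[0,1]\to\mathcal{P}_n$ maps $f$ to the unique $p\in\mathcal{P}_n$ with $\|f-p\|=\min_{q\in\mathcal{P}_n}\|f-q\|$ (it is single-valued and continuous). The dual $C^*[0,1]$ is identified with the space of real regular countably additive Borel signed measures $\mu$ on $[0,1]$, with pairing $\langle\mu,f\rangle=\int_0^1 f(t)\,\mu(dt)$. $\mathcal{P}_n^\perp=\{\mu\in C^*[0,1]:\langle\mu,q\rangle=0\text{ for every }q\in\mathcal{P}_n\}$. For $f\in C[0,1]$ and $\mu\in C^*[0,1]$, the Mordukhovich derivative (coderivative) of $P_{\mathcal{P}_n}$ at $f$ applied to $\mu$ is the set $$\widehat{D}^*P_{\mathcal{P}_n}(f)(\mu)=\Big\{\varphi\in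 C^*[0,1]:\ \limsup_{g\to f,\ g\neq f}\frac{\langle\varphi,g-f\rangle-\langle\mu,P_{\mathcal{P}_n}(g)-P_{\mathcal{P}_n}(f)\rangle}{\|g-f\|+\|P_{\mathcal{P}_n}(g)-P_{\mathcal{P}_n}(f)\|}\le 0\Big\}.$$ A fixed point of the set-valued map $\widehat{D}^*P_{\mathcal{P}_n}(f):C^*[0,1]\rightrightarrows C^*[0,1]$ is a $\varphi$ with $\varphi\in\widehat{D}^*P_{\mathcal{P}_n}(f)(\varphi)$. *)

(* Defs.v *)
From Stdlib Require Import Reals ClassicalEpsilon.
From Coquelicot Require Import Coquelicot.
Open Scope R_scope.

(* Elements of C[0,1] are represented by functions R -> R that are continuous
   on [0,1]; only their values on [0,1] ever matter. *)
Definition I01 (x : R) : Prop := 0 <= x <= 1.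

Definition cont01 (g : R -> R) : Prop :=
  forall x, I01 x -> forall eps, 0 < eps -> exists delta, 0 < delta /\
    forall y, I01 y -> Rabs (y - x) < delta -> Rabs (g y - g x) < eps.

Definition supnorm (g : R -> R) : R :=
  real (Lub_Rbar (fun y => exists t, I01 t /\ y = Rabs (g t))).

Definition fsub (g h : R -> R) : R -> R := fun x => g x - h x.

Definition isPoly (n : nat) (p : R -> R) : Prop :=
  exists c : nat -> R, forall x, I01 x -> p x = sum_f_R0 (fun k => c k * x ^ k) n.

Definition best_approx (n : nat) (g p : R -> R) : Prop :=
  isPoly n p /\ forall q, isPoly n q -> supnorm (fsub g p) <= supnorm (fsub g q).

(* The metric projection P_{P_n}: a (the, by Haar uniqueness) best approximant. *)
Definition proj (n : nat) (g : R -> R) : R -> R :=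
  epsilon (inhabits (fun _ : R => 0)) (fun p => best_approx n g p).

Definition dual (phi : (R -> R) -> R) : Prop :=
  (forall g h, cont01 g -> cont01 h -> phi (fun x => g x + h x) = phi g + phi h) /\
  (forall a g, cont01 g -> phi (fun x => a * g x) = a * phi g) /\
  (exists M, forall g, cont01 g -> Rabs (phi g) <= M * supnorm g).

Definition perp (n : nat) (mu : (R -> R) -> R) : Prop :=
  dual mu /\ forall q, isPoly n q -> mu q = 0.

(* phi \in \hat D^* P_{P_n}(f)(mu): the limsup over g -> f, g <> f, of the
   quotient is <= 0, unfolded in epsilon-delta form. *)
Definition coderiv (n : nat) (f : R -> R) (mu phi : (R -> R) -> R) : Prop :=
  dual phi /\
  forall eps, 0 < eps -> exists delta, 0 < delta /\
    forall g, cont01 g -> 0 < supnorm (fsub g f) < delta ->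
      (phi (fsub g f) - mu (fsub (proj n g) (proj n f))) /
        (supnorm (fsub g f) + supnorm (fsub (proj n g) (proj n f))) <= eps.

(* Main.v *)
Require Import Defs.
From Stdlib Require Import Reals Lra ClassicalEpsilon Classical FunctionalExtensionality List Lia.
From Coquelicot Require Import Coquelicot.
Open Scope R_scope.

Lemma sup_spec (g : R -> R) (M : R) :
  (forall x, I01 x -> Rabs (g x) <= M) ->
  (forall x, I01 x -> Rabs (g x) <= supnorm g) /\ supnorm g <= M.
Proof.
  intros HM. unfold supnorm.
  set (S := fun y => exists t, I01 t /\ y = Rabs (g t)).
  destruct (Lub_Rbar_correct S) as [Hub Hlub].
  assert (H1 : Rbar_le (Lub_Rbar S) (Finite M)).
  { apply Hlub. intros y [t [Ht ->]]. simpl. now apply HM. }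
  assert (H2 : Rbar_le (Finite (Rabs (g 0))) (Lub_Rbar S)).
  { apply Hub. exists 0. split; [unfold I01; lra | reflexivity]. }
  destruct (Lub_Rbar S) as [r| |] eqn:E; simpl in *; try contradiction.
  split; [|exact H1]. intros x Hx. 
  apply (Hub (Rabs (g x))). exists x. split; [exact Hx | reflexivity].
Qed.

Lemma sup_le (g : R -> R) (M : R) :
  (forall x, I01 x -> Rabs (g x) <= M) -> supnorm g <= M.
Proof. intros H; apply (sup_spec g M H). Qed.

Lemma sup_ge (g : R -> R) (M : R) :
  (forall x, I01 x -> Rabs (g x) <= M) -> forall x, I01 x -> Rabs (g x) <= supnorm g.
Proof. intros H; apply (sup_spec g M H). Qed.

Lemma sup_ext (g h : R -> R) : (forall x, I01 x -> g x = h x) -> supnorm g = supnorm h.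
Proof.
  intros H. unfold supnorm. f_equal. apply Lub_Rbar_eqset.
  intros y; split; intros [t [Ht ->]]; exists t; split; auto; rewrite H; auto.
Qed.

Definition clamp (x : R) : R := Rmax 0 (Rmin x 1).

Lemma clamp_I01 x : I01 (clamp x).
Proof. unfold clamp, I01, Rmax, Rmin. repeat destruct Rle_dec; lra. Qed.

Lemma clamp_id x : I01 x -> clamp x = x.
Proof. unfold clamp, I01, Rmax, Rmin. repeat destruct Rle_dec; lra. Qed.

Lemma clamp_lip x y : Rabs (clamp x - clamp y) <= Rabs (x - y).
Proof. unfold clamp, Rmax, Rmin. repeat destruct Rle_dec; unfold Rabs; repeat destruct Rcase_abs; lra. Qed.

Definition CC (G : R -> R) := forall c, continuity_pt G c.

Lemma cont01_clamp g : cont01 g -> CC (fun x => g (clamp x)).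
Proof.
  intros Hg c eps Heps.
  destruct (Hg (clamp c) (clamp_I01 c) eps Heps) as [d [Hd Hd']].
  exists d. split; [lra|]. intros x [_ Hx]. simpl in *. unfold R_dist in *.
  apply Hd'. apply clamp_I01. pose proof (clamp_lip x c). lra.
Qed.

Lemma cont01_of (G g : R -> R) : CC G -> (forall x, I01 x -> g x = G x) -> cont01 g.
Proof.
  intros HG Heq x Hx eps Heps.
  destruct (HG x eps Heps) as [d [Hd Hd']].
  exists d. split; [lra|]. intros y Hy Hyx.
  rewrite !Heq by auto.
  destruct (Req_dec y x) as [->|Hne]. { rewrite Rminus_diag, Rabs_R0; lra. }
  apply (Hd' y). split. split; [exact I| auto]. exact Hyx.
Qed.

Lemma cont01_CC g : cont01 g -> exists G, CC G /\ forall x, I01 x -> g x = G x.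
Proof.
  intros H. exists (fun x => g (clamp x)). split. now apply cont01_clamp.
  intros x Hx. now rewrite clamp_id.
Qed.

Lemma CC_evt G : CC G -> exists x0, I01 x0 /\ forall x, I01 x -> G x <= G x0.
Proof.
  intros H. destruct (continuity_ab_maj G 0 1) as [m [Hm Hm']]; [lra| intros; apply H|].
  exists m. split; [exact Hm'|]. intros x Hx. apply Hm. exact Hx.
Qed.

Lemma cont01_evt g : cont01 g -> exists x0, I01 x0 /\ forall x, I01 x -> g x <= g x0.
Proof.
  intros H. destruct (cont01_CC g H) as [G [HG HGe]].
  destruct (CC_evt G HG) as [x0 [Hx0 H0]]. exists x0. split; auto.
  intros x Hx. rewrite !HGe; auto.
Qed.

Lemma CC_abs G : CC G -> CC (fun x => Rabs (G x)).
Proof. intros H c. apply (continuity_pt_comp G Rabs). apply H. apply Rcontinuity_abs. Qed.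

Lemma CC_plus G H : CC G -> CC H -> CC (fun x => G x + H x).
Proof. intros a b c. apply (continuity_pt_plus G H); auto. Qed.
Lemma CC_minus G H : CC G -> CC H -> CC (fun x => G x - H x).
Proof. intros a b c. apply (continuity_pt_minus G H); auto. Qed.
Lemma CC_mult G H : CC G -> CC H -> CC (fun x => G x * H x).
Proof. intros a b c. apply (continuity_pt_mult G H); auto. Qed.
Lemma CC_const a : CC (fun _ => a).
Proof. intros c. apply continuity_pt_const. intros x y; auto. Qed.
Lemma CC_id : CC (fun x => x).
Proof. intros c. apply derivable_continuous_pt, derivable_pt_id. Qed.

Lemma cont01_bnd g : cont01 g -> exists M, forall x, I01 x -> Rabs (g x) <= M.
Proof.
  intros H. destruct (cont01_CC g H) as [G [HG HGe]].
  destruct (CC_evt _ (CC_abs G HG)) as [x0 [_ H0]]. exists (Rabs (G x0)).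
  intros x Hx. rewrite HGe; auto.
Qed.

Lemma sup_attain g : cont01 g -> exists x0, I01 x0 /\ supnorm g = Rabs (g x0).
Proof.
  intros H. destruct (cont01_CC g H) as [G [HG HGe]].
  destruct (CC_evt _ (CC_abs G HG)) as [x0 [Hx0 H0]]. exists x0. split; auto.
  apply Rle_antisym.
  - apply sup_le. intros x Hx. rewrite !HGe; auto.
  - apply (sup_ge g (Rabs (g x0))); auto. intros x Hx. rewrite !HGe; auto.
Qed.

Lemma sup_lt g E : cont01 g -> (forall x, I01 x -> Rabs (g x) < E) -> supnorm g < E.
Proof.
  intros H HE. destruct (sup_attain g H) as [x0 [Hx0 ->]]. auto.
Qed.

Lemma sup_nonneg g : 0 <= supnorm g.
Proof.
  unfold supnorm.
  set (S := fun y => exists t, I01 t /\ y = Rabs (g t)).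
  destruct (Lub_Rbar_correct S) as [Hub _].
  assert (H2 : Rbar_le (Finite (Rabs (g 0))) (Lub_Rbar S)).
  { apply Hub. exists 0. split; [unfold I01; lra | reflexivity]. }
  destruct (Lub_Rbar S); simpl in *; try lra. pose proof (Rabs_pos (g 0)); lra.
Qed.

Lemma sup_scal g a : cont01 g -> supnorm (fun x => a * g x) = Rabs a * supnorm g.
Proof.
  intros H. destruct (cont01_bnd g H) as [M HM].
  apply Rle_antisym.
  - apply sup_le. intros x Hx. rewrite Rabs_mult. apply Rmult_le_compat_l. apply Rabs_pos.
    apply (sup_ge g M); auto.
  - destruct (sup_attain g H) as [x0 [Hx0 ->]]. rewrite <- Rabs_mult.
    apply (sup_ge (fun x => a * g x) (Rabs a * M)); auto.
    intros x Hx. rewrite Rabs_mult. apply Rmult_le_compat_l. apply Rabs_pos. auto.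
Qed.

Fixpoint PP (d : nat) (p : R -> R) : Prop :=
  match d with
  | O => exists c, forall x, p x = c
  | S d => exists c s, PP d s /\ forall x, p x = c + x * s x
  end.

Lemma PP_ext d p q : PP d p -> (forall x, p x = q x) -> PP d q.
Proof.
  destruct d as [|d]; simpl.
  - intros [c Hc] H. exists c. intros x; rewrite <- H; auto.
  - intros [c [s [Hs Hp]]] H. exists c, s. split; auto. intros x; rewrite <- H; auto.
Qed.

Lemma PP_const d a : PP d (fun _ => a).
Proof.
  induction d; simpl. exists a; auto.
  exists a, (fun _ => 0). split. 
  - clear IHd. induction d; simpl. exists 0; auto. exists 0, (fun _ => 0); split; auto. intros; ring.
  - intros; ring.
Qed.

Lemma PP_mono d p : PP d p -> PP (S d) p.
Proof.
  revert p; induction d; intros p Hp.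
  - destruct Hp as [c Hc]. simpl. exists c, (fun _ => 0). split. exists 0; auto. intros; rewrite Hc; ring.
  - destruct Hp as [c [s [Hs Hp]]]. exists c, s. split; auto.
Qed.

Lemma PP_mono_le d e p : (d <= e)%nat -> PP d p -> PP e p.
Proof. induction 1; auto. intros; apply PP_mono; auto. Qed.

Lemma PP_plus d p q : PP d p -> PP d q -> PP d (fun x => p x + q x).
Proof.
  revert p q; induction d; intros p q Hp Hq.
  - destruct Hp as [a Ha], Hq as [b Hb]. exists (a+b). intros; rewrite Ha, Hb; auto.
  - destruct Hp as [a [s [Hs Hp]]], Hq as [b [t [Ht Hq]]].
    exists (a+b), (fun x => s x + t x). split; auto. intros; rewrite Hp, Hq; ring.
Qed.

Lemma PP_scal d a p : PP d p -> PP d (fun x => a * p x).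
Proof.
  revert p; induction d; intros p Hp.
  - destruct Hp as [b Hb]. exists (a*b). intros; rewrite Hb; auto.
  - destruct Hp as [b [s [Hs Hp]]].
    exists (a*b), (fun x => a * s x). split; auto. intros; rewrite Hp; ring.
Qed.

Lemma PP_minus d p q : PP d p -> PP d q -> PP d (fun x => p x - q x).
Proof.
  intros Hp Hq. apply PP_ext with (fun x => p x + (-1) * q x).
  apply PP_plus; auto. apply PP_scal; auto. intros; ring.
Qed.

Lemma PP_lin d a p : PP d p -> PP (S d) (fun x => (x - a) * p x).
Proof.
  revert p; induction d; intros p Hp.
  - destruct Hp as [c Hc]. exists (-a*c), (fun _ => c). split. exists c; auto.
    intros; rewrite Hc; ring.
  - destruct Hp as [c [s [Hs Hp]]].
    exists (-a*c), (fun x => c + (x - a) * s x). split.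
    + apply PP_plus. apply PP_const. apply IHd; auto.
    + intros; rewrite Hp; ring.
Qed.

Lemma PP_div d p a : PP (S d) p -> p a = 0 -> exists s, PP d s /\ forall x, p x = (x - a) * s x.
Proof.
  revert p; induction d; intros p Hp Ha.
  - destruct Hp as [c [s [[b Hb] Hp]]]. exists (fun _ => b). split. exists b; auto.
    intros x. rewrite Hp. rewrite Hp, Hb in Ha. rewrite Hb. lra.
  - destruct Hp as [c [s [Hs Hp]]].
    destruct (IHd (fun x => s x - s a)) as [t [Ht Hst]].
    + apply PP_minus; auto. apply PP_const.
    + ring.
    + exists (fun x => s a + x * t x). split.
      * exists (s a), t. split; auto.
      * intros x. rewrite Hp in Ha. rewrite Hp.
        assert (E : s x = s a + (x - a) * t x) by (rewrite <- Hst; ring). rewrite E. nra.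
Qed.

Lemma PP_CC d p : PP d p -> CC p.
Proof.
  revert p; induction d; intros p Hp.
  - destruct Hp as [c Hc]. intros x. 
    assert (E : p = fun _ => c) by (apply functional_extensionality; auto). rewrite E. apply CC_const.
  - destruct Hp as [c [s [Hs Hp]]].
    assert (E : p = fun x => c + x * s x) by (apply functional_extensionality; auto). rewrite E.
    apply CC_plus. apply CC_const. apply CC_mult. apply CC_id. auto.
Qed.

Lemma PP_roots d p : PP d p -> (exists x, I01 x /\ p x <> 0) ->
  exists L : list R, (length L <= d)%nat /\ forall x, I01 x -> p x = 0 -> In x L.
Proof.
  revert p; induction d; intros p Hp [x0 [Hx0 Hne]].
  - exists nil. split; auto. destruct Hp as [c Hc]. intros x _ Hx. rewrite Hc in Hx, Hne. contradiction.
  - destruct (classic (exists a, I01 a /\ p a = 0)) as [[a [Ha Hpa]]|Hno].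
    + destruct (PP_div d p a Hp Hpa) as [s [Hs Hps]].
      destruct (IHd s Hs) as [L [HL HL']].
      { exists x0. split; auto. intros E. apply Hne. rewrite Hps, E. ring. }
      exists (a :: L). split. simpl; lia.
      intros x Hx Hpx. rewrite Hps in Hpx. destruct (Rmult_integral _ _ Hpx).
      * left; lra.
      * right; auto.
    + exists nil. split. simpl; lia. intros x Hx Hpx. exfalso; apply Hno; eauto.
Qed.

Fixpoint prodL (L : list R) (x : R) : R :=
  match L with nil => 1 | a :: L => (x - a) * prodL L x end.

Lemma prodL_PP L : PP (length L) (prodL L).
Proof. induction L; simpl. exists 1; auto. apply (PP_lin _ a (prodL L)); auto. Qed.

Lemma prodL_zero L z : In z L -> prodL L z = 0.
Proof. induction L; simpl; intros H; [contradiction|]. destruct H as [->|H]. ring. rewrite IHL; auto; ring. Qed.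

Lemma prodL_nz L z : ~ In z L -> prodL L z <> 0.
Proof.
  induction L; simpl; intros H. lra. apply Rmult_integral_contrapositive. split.
  intros E; apply H; left; lra. apply IHL; auto.
Qed.

Lemma interp (v : R -> R) L : exists q, PP (length L) q /\ forall z, In z L -> q z = v z.
Proof.
  induction L as [|a L IH].
  - exists (fun _ => 0). split. exists 0; auto. intros z [].
  - destruct IH as [q [Hq Hqv]].
    destruct (classic (In a L)) as [Hin|Hnin].
    + exists q. split. apply PP_mono; auto. intros z [->|Hz]; auto.
    + set (c := (v a - q a) / prodL L a).
      exists (fun x => q x + c * prodL L x). split.
      * apply PP_mono. apply PP_plus; auto. apply PP_scal. apply prodL_PP.
      * intros z [<-|Hz].
        -- unfold c. field. apply prodL_nz; auto.
        -- rewrite prodL_zero; auto. rewrite Hqv; auto. ring.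
Qed.

Lemma sum_shift (c : nat -> R) d x :
  sum_f_R0 (fun k => c k * x ^ k) (S d) = c O + x * sum_f_R0 (fun k => c (S k) * x ^ k) d.
Proof.
  induction d.
  - simpl. ring.
  - change (sum_f_R0 (fun k => c k * x ^ k) (S (S d))) with
      (sum_f_R0 (fun k => c k * x ^ k) (S d) + c (S (S d)) * x ^ (S (S d))).
    rewrite IHd. simpl. ring.
Qed.

Lemma PP_sum d (c : nat -> R) : PP d (fun x => sum_f_R0 (fun k => c k * x ^ k) d).
Proof.
  revert c; induction d; intros c.
  - exists (c O). intros; simpl; ring.
  - exists (c O), (fun x => sum_f_R0 (fun k => c (S k) * x ^ k) d). split.
    apply (IHd (fun k => c (S k))). intros; apply sum_shift.
Qed.

Lemma PP_coef d p : PP d p -> exists c : nat -> R, forall x, p x = sum_f_R0 (fun k => c k * x ^ k) d.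
Proof.
  revert p; induction d; intros p Hp.
  - destruct Hp as [a Ha]. exists (fun _ => a). intros; simpl; rewrite Ha; ring.
  - destruct Hp as [a [s [Hs Hp]]]. destruct (IHd s Hs) as [b Hb].
    exists (fun k => match k with O => a | S k => b k end). intros x.
    rewrite sum_shift, Hp, Hb. reflexivity.
Qed.

Lemma isPoly_PP d p : isPoly d p -> exists P, PP d P /\ forall x, I01 x -> p x = P x.
Proof. intros [c Hc]. eexists; split; [apply (PP_sum d c)| exact Hc]. Qed.

Lemma PP_isPoly d p P : PP d P -> (forall x, I01 x -> p x = P x) -> isPoly d p.
Proof. intros HP H. destruct (PP_coef d P HP) as [c Hc]. exists c. intros x Hx. rewrite H, Hc; auto. Qed.

Lemma isPoly_cont01 d p : isPoly d p -> cont01 p.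
Proof. intros H. destruct (isPoly_PP d p H) as [P [HP HPe]]. apply (cont01_of P); auto. now apply (PP_CC d). Qed.

Lemma avg_eq a b E : Rabs a <= E -> Rabs b <= E -> Rabs ((a + b) / 2) = E -> a = b.
Proof. unfold Rabs; repeat destruct Rcase_abs; intros; lra. Qed.

Lemma key (e q w E E' : R) : Rabs e <= E -> (e * q <= 0 -> Rabs e <= E') -> (e * q > 0 -> e * w > 0) ->
  E' < E -> Rabs w <= E / 2 -> Rabs w <= (E - E') / 2 -> 0 < E -> Rabs (e - w) < E.
Proof.
  intros H1 H2 H3 H4 H5 H6 H7.
  destruct (Rle_lt_dec (e * q) 0) as [Hn|Hp].
  - specialize (H2 Hn). pose proof (Rabs_triang e (-w)). rewrite Rabs_Ropp in H. 
    unfold Rminus. lra.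
  - specialize (H3 Hp).
    assert (S : (e > 0 /\ w > 0) \/ (e < 0 /\ w < 0)).
    { destruct (Rtotal_order e 0) as [Ha|[Ha|Ha]]; destruct (Rtotal_order w 0) as [Hb|[Hb|Hb]];
      subst; try nra. }
    revert H1 H5; unfold Rabs; repeat destruct Rcase_abs; intros; lra.
Qed.

Lemma sup_pt d f p : cont01 f -> isPoly d p -> forall x, I01 x ->
  Rabs (f x - p x) <= supnorm (fsub f p).
Proof.
  intros Hf Hp. assert (Hc : cont01 (fsub f p)).
  { destruct (cont01_CC f Hf) as [F [HF HFe]]. destruct (isPoly_PP d p Hp) as [P [HP HPe]].
    apply (cont01_of (fun x => F x - P x)). apply CC_minus; auto. eapply PP_CC; eauto.
    intros x Hx. unfold fsub. rewrite HFe, HPe; auto. }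
  destruct (cont01_bnd _ Hc) as [M HM]. apply (sup_ge _ M HM).
Qed.

Lemma unique d f p1 p2 : cont01 f -> best_approx d f p1 -> best_approx d f p2 ->
  forall x, I01 x -> p1 x = p2 x.
Proof.
  intros Hf [Hp1 B1] [Hp2 B2].
  destruct (isPoly_PP d p1 Hp1) as [P1 [HP1 HP1e]].
  destruct (isPoly_PP d p2 Hp2) as [P2 [HP2 HP2e]].
  destruct (cont01_CC f Hf) as [F [HF HFe]].
  set (E := supnorm (fsub f p1)).
  assert (HE2 : supnorm (fsub f p2) = E).
  { apply Rle_antisym. apply B2; auto. apply B1; auto. }
  assert (Hpt1 : forall x, I01 x -> Rabs (F x - P1 x) <= E).
  { intros x Hx. rewrite <- HFe, <- HP1e by auto. apply (sup_pt d); auto. }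
  assert (Hpt2 : forall x, I01 x -> Rabs (F x - P2 x) <= E).
  { intros x Hx. rewrite <- HFe, <- HP2e by auto. rewrite <- HE2. apply (sup_pt d); auto. }
  intros x0 Hx0. rewrite HP1e, HP2e by auto.
  apply NNPP. intros Hne.
  set (eG := fun x => F x - (P1 x + P2 x) / 2).
  assert (HeG : CC eG). { apply CC_minus; auto. apply (PP_CC d). apply PP_scal with (a := /2) in HP1.
    apply PP_ext with (fun x => / 2 * P1 x + / 2 * P2 x). apply PP_plus; auto. apply PP_scal; auto.
    intros; field. }
  assert (Hepos : forall x, I01 x -> Rabs (eG x) <= E).
  { intros x Hx. specialize (Hpt1 x Hx). specialize (Hpt2 x Hx). unfold eG.
    revert Hpt1 Hpt2. unfold Rabs; repeat destruct Rcase_abs; intros; lra. }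
  assert (Ht : 0 < E).
  { specialize (Hpt1 x0 Hx0). specialize (Hpt2 x0 Hx0). pose proof (Rabs_pos (F x0 - P1 x0)).
    destruct (Req_dec E 0) as [E0|]; [|lra]. exfalso; apply Hne.
    rewrite E0 in *. revert Hpt1 Hpt2. unfold Rabs; repeat destruct Rcase_abs; intros; lra. }
  set (r := fun x => P1 x - P2 x).
  destruct (PP_roots d r (PP_minus d _ _ HP1 HP2)) as [L [HL HLr]].
  { exists x0. split; auto. unfold r. lra. }
  destruct (interp eG L) as [q [Hq Hqv]].
  assert (HqD : PP d q) by (apply (PP_mono_le (length L)); auto).
  assert (HZ : forall x, I01 x -> Rabs (eG x) = E -> eG x * q x = E * E).
  { intros x Hx Habs. rewrite Hqv.
    - rewrite <- (Rabs_mult), <- Rabs_mult in Habs || idtac.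
      assert (eG x * eG x = Rabs (eG x) * Rabs (eG x)).
      { unfold Rabs; destruct Rcase_abs; ring. } rewrite H, Habs; ring.
    - apply HLr; auto. unfold r.
      pose proof (avg_eq (F x - P1 x) (F x - P2 x) E (Hpt1 x Hx) (Hpt2 x Hx)).
      assert (F x - P1 x = F x - P2 x). { apply H. rewrite <- Habs. unfold eG. f_equal. field. }
      lra. }
  set (h := fun x => Rabs (eG x) - (eG x * q x + Rabs (eG x * q x)) / 2).
  assert (Hh : CC h).
  { apply CC_minus. apply CC_abs; auto. 
    intros c. unfold Rdiv. apply (continuity_pt_mult (fun x => eG x * q x + Rabs (eG x * q x)) (fun _ => /2)).
    apply (CC_plus (fun x => eG x * q x) (fun x => Rabs (eG x * q x))).
    apply CC_mult; auto. apply (PP_CC d); auto. apply CC_abs, CC_mult; auto. apply (PP_CC d); auto.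
    apply CC_const. }
  destruct (CC_evt h Hh) as [x1 [Hx1 Hmax]].
  set (E' := h x1).
  assert (HhE : forall x, I01 x -> h x < E).
  { intros x Hx. unfold h. destruct (Req_dec (Rabs (eG x)) E) as [Heq|Hneq].
    - rewrite (HZ x Hx Heq), Heq. rewrite Rabs_right by nra. nra.
    - pose proof (Hepos x Hx). pose proof (Rabs_pos (eG x * q x)).
      pose proof (Rle_abs (- (eG x * q x))). rewrite Rabs_Ropp in H1. lra. }
  assert (HE' : E' < E) by (apply HhE; auto).
  destruct (CC_evt (fun x => Rabs (q x)) (CC_abs q (PP_CC d q HqD))) as [xq [Hxq Hqmax]].
  set (Bq := Rabs (q xq) + 1).
  assert (HBq : 0 < Bq) by (unfold Bq; pose proof (Rabs_pos (q xq)); lra).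
  set (l := Rmin ((E - E') / (2 * Bq)) (E / (2 * Bq))).
  assert (Hl : 0 < l). { unfold l, Rmin. destruct Rle_dec; apply Rdiv_lt_0_compat; lra. }
  assert (Hl1 : l * Bq <= (E - E') / 2).
  { unfold l. apply Rle_trans with ((E - E') / (2 * Bq) * Bq).
    apply Rmult_le_compat_r; [lra| apply Rmin_l]. right; field; lra. }
  assert (Hl2 : l * Bq <= E / 2).
  { unfold l. apply Rle_trans with (E / (2 * Bq) * Bq).
    apply Rmult_le_compat_r; [lra| apply Rmin_r]. right; field; lra. }
  set (p' := fun x => (P1 x + P2 x) / 2 + l * q x).
  assert (Hp' : isPoly d p').
  { apply (PP_isPoly d p' p'); auto. unfold p'.
    apply PP_plus. apply PP_ext with (fun x => / 2 * P1 x + / 2 * P2 x).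
    apply PP_plus; apply PP_scal; auto. intros; field. apply PP_scal; auto. }
  assert (Hlt : supnorm (fsub f p') < E).
  { apply sup_lt.
    - apply (cont01_of (fun x => eG x - l * q x)). apply CC_minus; auto.
      apply CC_mult. apply CC_const. apply (PP_CC d); auto.
      intros x Hx. unfold fsub, p', eG. rewrite HFe; auto. ring.
    - intros x Hx. unfold fsub, p'. rewrite HFe by auto.
      replace (F x - ((P1 x + P2 x) / 2 + l * q x)) with (eG x - l * q x) by (unfold eG; ring).
      assert (Hqx : Rabs (q x) <= Bq) by (unfold Bq; specialize (Hqmax x Hx); lra).
      assert (Hw : Rabs (l * q x) <= l * Bq).
      { rewrite Rabs_mult, Rabs_right by lra. apply Rmult_le_compat_l; lra. }
      apply (key (eG x) (q x) (l * q x) E E'); auto; try lra.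
      + intros Hn. idtac. specialize (Hmax x Hx). unfold E'. 
        assert (Rabs (eG x * q x) = - (eG x * q x)) by (apply Rabs_left1; auto).
        assert (h x = Rabs (eG x)) by (unfold h; rewrite H; field). fold E' in Hmax. rewrite H0 in Hmax. exact Hmax.
      + intros Hp. replace (eG x * (l * q x)) with (l * (eG x * q x)) by ring. nra. }
  assert (supnorm (fsub f p1) <= supnorm (fsub f p')) by (apply B1; auto).
  fold E in H. lra.
Qed.

Lemma cont01_lin a b g h : cont01 g -> cont01 h -> cont01 (fun x => a * g x + b * h x).
Proof.
  intros Hg Hh. destruct (cont01_CC g Hg) as [G [HG HGe]]. destruct (cont01_CC h Hh) as [H [HH HHe]].
  apply (cont01_of (fun x => a * G x + b * H x)).
  apply CC_plus; apply CC_mult; auto; apply CC_const.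
  intros x Hx; rewrite HGe, HHe; auto.
Qed.

Lemma cont01_ext g h : cont01 g -> (forall x, I01 x -> g x = h x) -> cont01 h.
Proof.
  intros Hg E. destruct (cont01_CC g Hg) as [G [HG HGe]]. apply (cont01_of G); auto.
  intros; rewrite <- E; auto.
Qed.

Lemma sup_pt' u : cont01 u -> forall x, I01 x -> Rabs (u x) <= supnorm u.
Proof. intros H. destruct (cont01_bnd u H) as [M HM]. apply (sup_ge u M HM). Qed.

Definition BA (V : (R -> R) -> Prop) g p := V p /\ forall q, V q -> supnorm (fsub g p) <= supnorm (fsub g q).

Lemma step (V : (R -> R) -> Prop) (m : R -> R) :
  (forall q, V q -> cont01 q) -> V (fun _ => 0) -> (forall a q, V q -> V (fun x => a * q x)) ->
  (forall g, cont01 g -> exists q, BA V g q) ->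
  cont01 m -> (forall x, I01 x -> Rabs (m x) <= 1) ->
  (forall q, V q -> exists x, I01 x /\ m x <> q x) ->
  forall g, cont01 g -> exists p,
    BA (fun p => exists t q, V q /\ forall x, I01 x -> p x = q x + t * m x) g p.
Proof.
  intros HVc HV0 HVs Hex Hm Hm1 Hnot g Hg.
  set (gt := fun t x => g x - t * m x).
  assert (Hgt : forall t, cont01 (gt t)).
  { intros t. apply cont01_ext with (fun x => 1 * g x + (- t) * m x). apply cont01_lin; auto.
    intros; unfold gt; ring. }
  set (qt := fun t => epsilon (inhabits (fun _ : R => 0)) (BA V (gt t))).
  assert (Hqt : forall t, BA V (gt t) (qt t)).
  { intros t. apply epsilon_spec. apply Hex; auto. }
  set (h := fun t => supnorm (fsub (gt t) (qt t))).
  assert (Hfs : forall t q, V q -> cont01 (fsub (gt t) q)).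
  { intros t q Hq. apply cont01_ext with (fun x => 1 * gt t x + (-1) * q x). apply cont01_lin; auto.
    intros; unfold fsub; ring. }
  assert (Hlip : forall t s, h t <= h s + Rabs (t - s)).
  { intros t s. apply Rle_trans with (supnorm (fsub (gt t) (qt s))).
    apply (proj2 (Hqt t)). apply Hqt.
    apply sup_le. intros x Hx.
    pose proof (sup_pt' _ (Hfs s (qt s) (proj1 (Hqt s))) x Hx) as H1. fold (h s) in H1.
    unfold fsub, gt in *.
    replace (g x - t * m x - qt s x) with ((g x - s * m x - qt s x) + (s - t) * m x) by ring.
    eapply Rle_trans. apply Rabs_triang. rewrite Rabs_mult.
    replace (Rabs (s - t)) with (Rabs (t - s)) by (rewrite <- Rabs_Ropp; f_equal; ring).
    specialize (Hm1 x Hx). pose proof (Rabs_pos (t - s)). idtac.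
    assert (Rabs (t - s) * Rabs (m x) <= Rabs (t - s)) by nra. lra. }
  assert (Hhc : CC h).
  { intros c eps Heps. exists eps. split; auto. intros x [_ Hx]. simpl in *. unfold R_dist in *.
    pose proof (Hlip x c). pose proof (Hlip c x). rewrite <- Rabs_Ropp, Ropp_minus_distr in H0.
    unfold Rabs at 1; destruct Rcase_abs; lra. }
  destruct (Hex m Hm) as [qm [Hqm Bqm]].
  set (dl := supnorm (fsub m qm)).
  assert (Hdl : 0 < dl).
  { destruct (Hnot qm Hqm) as [x [Hx Hne]].
    pose proof (sup_pt' (fsub m qm)) as Hs.
    assert (cont01 (fsub m qm)).
    { apply cont01_ext with (fun x => 1 * m x + (-1) * qm x). apply cont01_lin; auto.
      intros; unfold fsub; ring. }
    specialize (Hs H x Hx). change (Rabs (m x - qm x) <= dl) in Hs.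
    assert (0 < Rabs (m x - qm x)) by (apply Rabs_pos_lt; lra). lra. }
  assert (Hcoer : forall t, Rabs t * dl <= h t + supnorm g).
  { intros t. destruct (Req_dec t 0) as [->|Ht].
    - rewrite Rabs_R0, Rmult_0_l. pose proof (sup_nonneg (fsub (gt 0) (qt 0))). pose proof (sup_nonneg g).
      unfold h; lra.
    - set (q' := fun x => (- / t) * qt t x).
      assert (Hq' : V q') by (apply HVs, Hqt).
      assert (H1 : dl <= supnorm (fsub m q')) by (apply Bqm; auto).
      assert (H2 : Rabs t * supnorm (fsub m q') = supnorm (fun x => t * m x + qt t x)).
      { rewrite <- sup_scal. apply sup_ext. intros x _. unfold fsub, q'. field; auto.
        apply cont01_ext with (fun x => 1 * m x + (/t) * qt t x). apply cont01_lin; auto.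
        apply HVc, Hqt. intros; unfold fsub, q'; ring. }
      assert (H3 : supnorm (fun x => t * m x + qt t x) <= h t + supnorm g).
      { apply sup_le. intros x Hx.
        pose proof (sup_pt' _ (Hfs t (qt t) (proj1 (Hqt t))) x Hx) as H4. fold (h t) in H4.
        pose proof (sup_pt' _ Hg x Hx) as H5. change (Rabs (g x - t * m x - qt t x) <= h t) in H4.
        replace (t * m x + qt t x) with (g x + - (g x - t * m x - qt t x)) by ring.
        eapply Rle_trans. apply Rabs_triang. rewrite Rabs_Ropp. lra. }
      pose proof (Rabs_pos t). nra. }
  set (T := (2 * supnorm g + 1) / dl).
  assert (HT : 0 < T) by (unfold T; pose proof (sup_nonneg g); apply Rdiv_lt_0_compat; lra).
  destruct (continuity_ab_min h (-T) T) as [ts [Hmin Hts]]; [lra| intros; apply Hhc|].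
  assert (Hh0 : h 0 <= supnorm g).
  { apply Rle_trans with (supnorm (fsub (gt 0) (fun _ => 0))). apply Hqt; auto.
    right. apply sup_ext. intros; unfold fsub, gt; ring. }
  assert (Hall : forall t, h ts <= h t).
  { intros t. destruct (Rle_dec (Rabs t) T) as [Hle|Hgt'].
    - apply Hmin. unfold Rabs in Hle; destruct Rcase_abs; lra.
    - assert (h 0 >= h ts) by (apply Rle_ge, Hmin; lra).
      specialize (Hcoer t).
      assert (T * dl = 2 * supnorm g + 1) by (unfold T; field; lra).
      assert (T * dl < Rabs t * dl) by (apply Rmult_lt_compat_r; lra). lra. }
  exists (fun x => qt ts x + ts * m x). split.
  - exists ts, (qt ts). split; auto. apply Hqt.
  - intros p' [t' [q' [Hq' Hp']]].
    apply Rle_trans with (h ts).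
    + right. apply sup_ext. intros x _. unfold fsub, gt. ring.
    + apply Rle_trans with (h t'); auto.
      apply Rle_trans with (supnorm (fsub (gt t') q')). apply Hqt; auto.
      right. apply sup_ext. intros x Hx. unfold fsub, gt. rewrite Hp'; auto. ring.
Qed.

Lemma BA_iff V V' g p : (forall q, V q <-> V' q) -> BA V g p -> BA V' g p.
Proof. intros E [H1 H2]. split. apply E; auto. intros q Hq. apply H2, E; auto. Qed.

Lemma pow01 x k : I01 x -> 0 <= x ^ k <= 1.
Proof. intros [H0 H1]. induction k; simpl. lra. nra. Qed.

Lemma CC_pow k : CC (fun x => x ^ k).
Proof.
  induction k; simpl. apply CC_const. apply CC_mult; auto. apply CC_id.
Qed.

Lemma not_poly d Q : PP d Q -> (forall x, I01 x -> x ^ (S d) = Q x) -> False.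
Proof.
  revert Q; induction d; intros Q HQ HE.
  - destruct HQ as [c Hc]. pose proof (HE 0). pose proof (HE 1).
    rewrite Hc in H, H0. simpl in *. assert (I01 0) by (unfold I01; lra).
    assert (I01 1) by (unfold I01; lra). specialize (H H1). specialize (H0 H2). lra.
  - destruct HQ as [c [s [Hs HQ]]].
    assert (Hc : c = 0). { assert (I01 0) by (unfold I01; lra). specialize (HE 0 H).
      rewrite HQ in HE. simpl in HE. lra. }
    assert (Hpos : forall x, 0 < x <= 1 -> x ^ (S d) - s x = 0).
    { intros x Hx. assert (I01 x) by (unfold I01; lra). specialize (HE x H). rewrite HQ, Hc in HE.
      change (x ^ S (S d)) with (x * x ^ (S d)) in HE.
      apply (Rmult_eq_reg_l x). lra. lra. }
    apply (IHd s Hs). intros x Hx.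
    destruct (Req_dec x 0) as [->|Hx0].
    + set (u := fun x => x ^ (S d) - s x).
      assert (Hu : CC u) by (apply CC_minus; [apply CC_pow| apply (PP_CC d); auto]).
      apply NNPP. intros Hne.
      assert (Hu0 : u 0 <> 0) by (unfold u; intros E; apply Hne; lra).
      destruct (Hu 0 (Rabs (u 0))) as [a [Ha Ha']]. apply Rabs_pos_lt; auto.
      set (y := Rmin (a / 2) 1).
      assert (Hy : 0 < y <= 1). { unfold y, Rmin; destruct Rle_dec; lra. }
      assert (y <= a / 2) by apply Rmin_l.
      specialize (Ha' y). simpl in Ha'. unfold R_dist in Ha'.
      assert (u y = 0) by (apply Hpos; auto).
      rewrite H0, Rminus_0_l, Rabs_Ropp in Ha'. apply (Rlt_irrefl (Rabs (u 0))). apply Ha'.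
      split. split; [exact I| lra]. rewrite Rminus_0_r, Rabs_right; lra.
    + assert (Hx' : 0 < x <= 1) by (unfold I01 in Hx; lra). specialize (Hpos x Hx'). lra.
Qed.

Lemma isPoly_S d p : isPoly (S d) p <->
  exists t q, isPoly d q /\ forall x, I01 x -> p x = q x + t * x ^ (S d).
Proof.
  split.
  - intros [c Hc]. exists (c (S d)), (fun x => sum_f_R0 (fun k => c k * x ^ k) d). split.
    exists c; auto. intros x Hx. rewrite Hc; auto.
  - intros [t [q [[c Hc] Hp]]]. exists (fun k => if Nat.leb k d then c k else t).
    intros x Hx. rewrite Hp, Hc; auto.
    change (sum_f_R0 ?F (S d)) with (sum_f_R0 F d + F (S d)). cbv beta.
    rewrite (proj2 (Nat.leb_gt (S d) d)) by lia.
    f_equal. apply sum_eq. intros i Hi. replace (Nat.leb i d) with true; auto. idtac.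
    symmetry; apply Nat.leb_le; auto.
Qed.

Lemma isPoly_0 p : isPoly 0 p <->
  exists t q, (forall x, I01 x -> q x = 0) /\ forall x, I01 x -> p x = q x + t * 1.
Proof.
  split.
  - intros [c Hc]. exists (c O), (fun _ => 0). split; auto. intros x Hx. rewrite Hc; auto. simpl; ring.
  - intros [t [q [Hq Hp]]]. exists (fun _ => t). intros x Hx. rewrite Hp, Hq; auto. simpl; ring.
Qed.

Lemma exist_best d g : cont01 g -> exists p, best_approx d g p.
Proof.
  revert g. induction d; intros g Hg.
  - set (V := fun q : R -> R => forall x, I01 x -> q x = 0).
    assert (H1 : forall q, V q -> cont01 q).
    { intros q Hq. apply (cont01_of (fun _ => 0)). apply CC_const. auto. }
    assert (H2 : V (fun _ => 0)) by (intros x _; auto).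
    assert (H3 : forall a q, V q -> V (fun x => a * q x)).
    { intros a q Hq x Hx. rewrite Hq; auto; ring. }
    assert (H4 : forall g, cont01 g -> exists q, BA V g q).
    { intros g0 Hg0. exists (fun _ => 0). split. auto. intros q Hq. right. apply sup_ext.
      intros x Hx. unfold fsub. rewrite Hq; auto. }
    assert (H5 : cont01 (fun _ => 1)) by (apply (cont01_of (fun _ => 1)); [apply CC_const| auto]).
    assert (H6 : forall x, I01 x -> Rabs ((fun _ => 1) x) <= 1) by (intros; rewrite Rabs_R1; lra).
    assert (H7 : forall q, V q -> exists x, I01 x /\ (fun _ => 1) x <> q x).
    { intros q Hq. exists 0. assert (I01 0) by (unfold I01; lra). split; auto. rewrite Hq; auto. }
    destruct (step V (fun _ => 1) H1 H2 H3 H4 H5 H6 H7 g Hg) as [p Hp].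
    exists p. apply (BA_iff _ _ _ _ (fun q => iff_sym (isPoly_0 q)) Hp).
  - set (V := isPoly d).
    assert (H1 : forall q, V q -> cont01 q) by apply isPoly_cont01.
    assert (H2 : V (fun _ => 0)) by (apply (PP_isPoly d _ (fun _ => 0)); [apply PP_const| auto]).
    assert (H3 : forall a q, V q -> V (fun x => a * q x)).
    { intros a q Hq. destruct (isPoly_PP d q Hq) as [Q [HQ HQe]].
      apply (PP_isPoly d _ (fun x => a * Q x)). apply PP_scal; auto. intros; rewrite HQe; auto. }
    assert (H4 : forall g, cont01 g -> exists q, BA V g q).
    { intros g0 Hg0. destruct (IHd g0 Hg0) as [p Hp]. exists p. exact Hp. }
    assert (H5 : cont01 (fun x => x ^ (S d))) by (apply (cont01_of (fun x => x ^ (S d))); [apply CC_pow| auto]).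
    assert (H6 : forall x, I01 x -> Rabs ((fun x => x ^ (S d)) x) <= 1).
    { intros x Hx. pose proof (pow01 x (S d) Hx). rewrite Rabs_right; lra. }
    assert (H7 : forall q, V q -> exists x, I01 x /\ (fun x => x ^ (S d)) x <> q x).
    { intros q Hq. destruct (isPoly_PP d q Hq) as [Q [HQ HQe]].
      apply NNPP. intros Hn. apply (not_poly d Q HQ). intros x Hx. rewrite <- HQe; auto.
      apply NNPP. intros Hn'. apply Hn. exists x. auto. }
    destruct (step V _ H1 H2 H3 H4 H5 H6 H7 g Hg) as [p Hp].
    exists p. apply (BA_iff _ _ _ _ (fun q => iff_sym (isPoly_S d q)) Hp).
Qed.

Lemma fsub_cont d f p : cont01 f -> isPoly d p -> cont01 (fsub f p).
Proof.
  intros Hf Hp. apply cont01_ext with (fun x => 1 * f x + (-1) * p x).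
  apply cont01_lin; auto. eapply isPoly_cont01; eauto. intros; unfold fsub; ring.
Qed.

Lemma isPoly_scal d a p : isPoly d p -> isPoly d (fun x => a * p x).
Proof.
  intros Hq. destruct (isPoly_PP d _ Hq) as [Q [HQ HQe]].
  apply (PP_isPoly d _ (fun x => a * Q x)). apply PP_scal; auto. intros; rewrite HQe; auto.
Qed.

Lemma best_scal d f p a : cont01 f -> 0 < a -> best_approx d f p ->
  best_approx d (fun x => a * f x) (fun x => a * p x).
Proof.
  intros Hf Ha [Hp B]. split. apply isPoly_scal; auto.
  intros q Hq.
  assert (E1 : forall r, isPoly d r -> supnorm (fsub (fun x => a * f x) (fun x => a * r x)) = a * supnorm (fsub f r)).
  { intros r Hr. transitivity (Rabs a * supnorm (fsub f r)); [| rewrite Rabs_right; lra].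
    rewrite <- sup_scal. apply sup_ext; intros; unfold fsub; ring. eapply fsub_cont; eauto. }
  rewrite E1 by auto.
  replace (supnorm (fsub (fun x => a * f x) q)) with
     (supnorm (fsub (fun x => a * f x) (fun x => a * ((/a) * q x)))).
  rewrite E1. apply Rmult_le_compat_l; [lra|]. apply B. apply isPoly_scal; auto.
  apply isPoly_scal; auto.
  apply sup_ext. intros; unfold fsub; field; lra.
Qed.

Lemma proj_spec n g : cont01 g -> best_approx n g (proj n g).
Proof. intros H. unfold proj. apply epsilon_spec. apply exist_best; auto. Qed.

Theorem theorem5p2 (n : nat) (f : R -> R) (mu : (R -> R) -> R) :
  (0 < n)%nat -> cont01 f -> dual mu -> mu f <> 0 ->
  (forall gamma, perp n gamma -> ~ coderiv n f gamma mu) /\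
  (perp n mu -> ~ coderiv n f mu mu).
Proof.
  intros Hn Hf Hmu Hmuf.
  assert (main : forall gamma, perp n gamma -> ~ coderiv n f gamma mu).
  { intros gamma [Hgd Hgp] [_ Hcd].
    set (p := proj n f).
    assert (Hbp : best_approx n f p) by (apply proj_spec; auto).
    destruct Hmu as [Hadd [Hsc [M HM]]].
    assert (Hfpos : 0 < supnorm f).
    { pose proof (sup_nonneg f). destruct (Req_dec (supnorm f) 0) as [E|]; [|lra].
      exfalso. specialize (HM f Hf). rewrite E, Rmult_0_r in HM.
      pose proof (Rabs_pos (mu f)). apply Hmuf. apply NNPP; intros Hne; pose proof (Rabs_pos_lt _ Hne); lra. }
    assert (Hmuabs : 0 < Rabs (mu f)) by (apply Rabs_pos_lt; auto).
    assert (Hp0 : 0 <= supnorm p) by apply sup_nonneg.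
    set (K := Rabs (mu f) / (supnorm f + supnorm p)).
    assert (HK : 0 < K) by (apply Rdiv_lt_0_compat; lra).
    destruct (Hcd (K / 2)) as [delta [Hdel Hdel']]; [lra|].
    set (lam := Rmin (1 / (2 * Rabs (mu f))) (delta / (2 * Rabs (mu f) * supnorm f))).
    assert (Hlam : 0 < lam).
    { unfold lam, Rmin; destruct Rle_dec; apply Rdiv_lt_0_compat; try lra; nra. }
    set (s := lam * mu f).
    assert (Hsabs : Rabs s = lam * Rabs (mu f)) by (unfold s; rewrite Rabs_mult, Rabs_right; lra).
    assert (Hs1 : Rabs s <= 1 / 2).
    { rewrite Hsabs. apply Rle_trans with (1 / (2 * Rabs (mu f)) * Rabs (mu f)).
      apply Rmult_le_compat_r; [lra| apply Rmin_l]. right; field; lra. }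
    assert (Hs2 : Rabs s * supnorm f <= delta / 2).
    { rewrite Hsabs. apply Rle_trans with (delta / (2 * Rabs (mu f) * supnorm f) * Rabs (mu f) * supnorm f).
      apply Rmult_le_compat_r; [lra|]. apply Rmult_le_compat_r; [lra| apply Rmin_r]. right; field; lra. }
    assert (Hspos : 0 < Rabs s) by (rewrite Hsabs; nra).
    assert (Hsmu : s * mu f = Rabs s * Rabs (mu f)).
    { rewrite Hsabs. unfold s. unfold Rabs; destruct Rcase_abs; ring. }
    set (g := fun x => (1 + s) * f x).
    assert (Hg : cont01 g).
    { apply cont01_ext with (fun x => (1 + s) * f x + 0 * f x). apply cont01_lin; auto.
      intros; unfold g; ring. }
    assert (Hs1' : 0 < 1 + s) by (revert Hs1; unfold Rabs; destruct Rcase_abs; lra).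
    assert (Hbg : best_approx n g (fun x => (1 + s) * p x)) by (apply best_scal; auto).
    assert (Hpg : forall x, I01 x -> proj n g x = (1 + s) * p x).
    { intros x Hx. apply (unique n g (proj n g) (fun x => (1 + s) * p x)); auto. apply proj_spec; auto. }
    assert (Efg : fsub g f = fun x => s * f x).
    { apply functional_extensionality; intros x; unfold fsub, g; ring. }
    assert (N1 : supnorm (fsub g f) = Rabs s * supnorm f) by (rewrite Efg; apply sup_scal; auto).
    assert (Hpc : cont01 p) by (eapply isPoly_cont01; apply Hbp).
    assert (N2 : supnorm (fsub (proj n g) (proj n f)) = Rabs s * supnorm p).
    { rewrite <- sup_scal by auto. apply sup_ext. intros x Hx. unfold fsub. rewrite Hpg by auto.
      fold p. ring. }
    assert (M1 : mu (fsub g f) = s * mu f) by (rewrite Efg; apply Hsc; auto).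
    assert (G1 : gamma (fsub (proj n g) (proj n f)) = 0).
    { apply Hgp. destruct (isPoly_PP n _ (proj1 (proj_spec n g Hg))) as [P1 [HP1 HP1e]].
      destruct (isPoly_PP n _ (proj1 Hbp)) as [P2 [HP2 HP2e]].
      apply (PP_isPoly n _ (fun x => P1 x - P2 x)). apply PP_minus; auto.
      intros x Hx. unfold fsub. rewrite HP1e, HP2e; auto. }
    specialize (Hdel' g Hg). rewrite N1, N2, M1, G1, Rminus_0_r, Hsmu in Hdel'.
    assert (R : Rabs s * Rabs (mu f) / (Rabs s * supnorm f + Rabs s * supnorm p) = K).
    { unfold K. field. repeat split; intro; nra. }
    rewrite R in Hdel'. assert (K <= K / 2) by (apply Hdel'; split; nra). lra. }
  split; [exact main|]. intros Hp. apply main; auto.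
Qed.
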